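(* For every tree $T\subseteq\mathbb{N}^{<\mathbb{N}}$, $[\mathcal{JT}(T)]=\{\mathcal{J}(Z):Z\in[T]\}$.
   Context: A tree is a subset of $\mathbb{N}^{<\mathbb{N}}$ closed under initial segments; $[T]$ is the set of infinite paths through $T$. Strings are coded by natural numbers via a fixed computable coding with $\sigma\subsetneq\tau$ implying code$(\sigma)<$ code$(\tau)$. For $\sigma$ finite or infinite, $\{e\}^\sigma_t(n)\downarrow$ means the $e$-th machine on input $n$ with oracle $\sigma$ halts in fewer than $\min(|\sigma|,t)$ steps. For $Z\in\mathbb{N}^\mathbb{N}$: $t_{-1}=1$, $t_n=\max\{t_{n-1}+1,\mu t(\{n\}^Z_t(n)\downarrow)\}$ ($t_n=t_{n-1}+1$ if no such $t$), and $\mathcal{J}(Z)(n)=Z\restriction t_n$. For finite $\sigma$: $t_{-1}=1$, $t_n=\max\{t_{n-1}+1,\mu t(\{n\}^{\sigma\restriction t}(n)\downarrow)\}$ (halting within $|\sigma\restriction t|$ steps; $t_n=t_{n-1}+1$ if no such $t$), and $J(\sigma)=\langle\sigma\restriction t_0,\dots,\sigma\restriction t_{k-1}\rangle$ with $k$ least such that $t_k>|\sigma|$. $\mathcal{JT}(T)=\{J(\sigma):\sigma\in T\}$. *)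

(* Defs.v *)
From Stdlib Require Import ClassicalEpsilon.
From mathcomp Require Import all_boot.

Set Implicit Arguments.
Unset Strict Implicit.
Unset Printing Implicit Defensive.

Definition restr (Z : nat -> nat) (t : nat) : seq nat := mkseq Z t.

Definition is_tree (T : seq nat -> Prop) : Prop :=
  forall (s : seq nat) (n : nat), T s -> T (take n s).

Definition paths (S : seq nat -> Prop) : (nat -> nat) -> Prop :=
  fun X => forall k, S (restr X k).

Definition sprefix (s t : seq nat) : bool := prefix s t && (s != t).

Definition mu_opt (P : pred nat) : option nat :=
  match excluded_middle_informative (exists t, P t) with
  | left h => Some (ex_minn h)
  | right _ => None
  end.

Definition tstep (P : pred nat) (prev : nat) : nat :=
  match mu_opt P with
  | Some m => maxn prev.+1 m
  | None => prev.+1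
  end.

Section Jumps.
(* The machine model, as explicit parameters:
   [hf e s k n] : the e-th oracle machine with FINITE oracle s on input n
                  halts in fewer than k steps;
   [hz e Z k n] : the e-th oracle machine with INFINITE oracle Z on input n
                  halts in fewer than k steps.
   [code]       : the fixed coding of strings by natural numbers. *)
Variable hf : nat -> seq nat -> nat -> nat -> bool.
Variable hz : nat -> (nat -> nat) -> nat -> nat -> bool.
Variable code : seq nat -> nat.

(* {e}^sigma_t(n)|  : halts in fewer than min(|sigma|, t) steps. *)
Definition convF (e : nat) (s : seq nat) (t n : nat) : bool :=
  hf e s (minn (size s) t) n.
(* for infinite Z, min(|Z|, t) = t *)
Definition convZ (e : nat) (Z : nat -> nat) (t n : nat) : bool :=
  hz e Z t n.

(* t_n for an infinite Z; index n here is the paper's t_n, with t_{-1} = 1. *)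
Fixpoint tZ (Z : nat -> nat) (n : nat) : nat :=
  match n with
  | 0 => tstep (fun t => convZ 0 Z t 0) 1
  | m.+1 => tstep (fun t => convZ m.+1 Z t m.+1) (tZ Z m)
  end.

Definition calJ (Z : nat -> nat) : nat -> nat :=
  fun n => code (restr Z (tZ Z n)).

(* t_n for a finite sigma: the oracle is sigma |` t, halting within
   |sigma |` t| = min(|sigma |` t|, t) steps. *)
Fixpoint tS (s : seq nat) (n : nat) : nat :=
  match n with
  | 0 => tstep (fun t => convF 0 (take t s) t 0) 1
  | m.+1 => tstep (fun t => convF m.+1 (take t s) t m.+1) (tS s m)
  end.

(* k = least k with t_k > |sigma|.  Since t_n >= n + 2, such k is <= |sigma|,
   so a bounded search over 0..|sigma| finds the least one. *)
Definition Jlen (s : seq nat) : nat :=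
  find (fun k => size s < tS s k) (iota 0 (size s).+1).

Definition Jfin (s : seq nat) : seq nat :=
  [seq code (take (tS s i) s) | i <- iota 0 (Jlen s)].

Definition JT (T : seq nat -> Prop) : seq nat -> Prop :=
  fun u => exists s, T s /\ u = Jfin s.

End Jumps.

Lemma tS_gt (hf : nat -> seq nat -> nat -> nat -> bool) (s : seq nat) (n : nat) : n.+1 < @tS hf s n.
Proof.
elim: n => [|n IH] /=; rewrite /tstep; case: mu_opt => [m|] //=.
all: by rewrite ?leq_max ?ltnS ?IH.
Qed.

(* Main.v *)
Require Import Defs.
From mathcomp Require Import all_boot.
From Stdlib Require Import ClassicalEpsilon FunctionalExtensionality.
Set Implicit Arguments. Unset Strict Implicit.

Lemma mu_someP (P : pred nat) m : mu_opt P = Some m -> P m /\ (forall t, P t -> m <= t).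
Proof. rewrite /mu_opt; case: excluded_middle_informative => // h [<-]. by case: ex_minnP. Qed.

Lemma mu_noneP (P : pred nat) : mu_opt P = None -> forall t, ~~ P t.
Proof.
rewrite /mu_opt; case: excluded_middle_informative => // h _ t.
apply/negP => Pt; apply: h; by exists t.
Qed.

Lemma mu_some_intro (P : pred nat) m : P m -> (forall t, t < m -> ~~ P t) -> mu_opt P = Some m.
Proof.
move=> Pm H; rewrite /mu_opt; case: excluded_middle_informative => [h|h]; last first.
  by case: h; exists m.
congr Some; case: ex_minnP => m' Pm' min'.
apply/eqP; rewrite eqn_leq min' // leqNgt; apply/negP => lt.
by move: (H _ lt); rewrite Pm'.
Qed.

Lemma mu_none_intro (P : pred nat) : (forall t, ~~ P t) -> mu_opt P = None.
Proof.
move=> H; rewrite /mu_opt; case: excluded_middle_informative => // -[t Pt].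
by move: (H t); rewrite Pt.
Qed.

Lemma tstep_gt P a : a < tstep P a.
Proof. rewrite /tstep; case: mu_opt => [m|] //; by rewrite leq_max leqnn. Qed.

Lemma tstep_ge P a m : mu_opt P = Some m -> m <= tstep P a.
Proof. rewrite /tstep => ->; by rewrite leq_max leqnn orbT. Qed.

Lemma tstep_cong (P Q : pred nat) a L :
  (forall t, P t = Q (minn t L)) -> tstep Q a <= L -> tstep P a = tstep Q a.
Proof.
move=> HPQ Hle; case E: (mu_opt Q) => [m|].
- have [Qm Hmin] := mu_someP E.
  have mL : m <= L by apply: leq_trans (tstep_ge a E) Hle.
  rewrite /tstep E (@mu_some_intro P m) //.
    by rewrite HPQ (minn_idPl mL).
  move=> t tm; rewrite HPQ (minn_idPl (ltnW (leq_trans tm mL))).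
  apply/negP => Qt; move: (Hmin _ Qt); by rewrite leqNgt tm.
- rewrite /tstep E mu_none_intro // => t; rewrite HPQ; exact: mu_noneP.
Qed.

Lemma tstep_cong2 (P Q : pred nat) a L :
  (forall t, t <= L -> P t = Q t) -> tstep P a <= L ->
  ((exists t, Q t) -> exists2 t, t <= L & Q t) -> tstep P a = tstep Q a.
Proof.
move=> HPQ Hle Hw; case E: (mu_opt P) => [m|].
- have [Pm Hmin] := mu_someP E.
  have mL : m <= L by apply: leq_trans (tstep_ge a E) Hle.
  rewrite /tstep E (@mu_some_intro Q m) //.
    by rewrite -HPQ.
  move=> t tm; rewrite -HPQ ?(ltnW (leq_trans tm mL)) //.
  apply/negP => Pt; move: (Hmin _ Pt); by rewrite leqNgt tm.
- rewrite /tstep E mu_none_intro // => t; apply/negP => Qt.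
  have [t' t'L Qt'] := Hw (ex_intro _ t Qt).
  by move: (mu_noneP E t'); rewrite HPQ // Qt'.
Qed.

Lemma tS_eq hf s n : tS hf s n =
  tstep (fun t => convF hf n (take t s) t n) (if n is m.+1 then tS hf s m else 1).
Proof. by case: n. Qed.

Lemma tZ_eq hz Z n : tZ hz Z n =
  tstep (fun t => convZ hz n Z t n) (if n is m.+1 then tZ hz Z m else 1).
Proof. by case: n. Qed.

Lemma incr_mono (f : nat -> nat) : (forall n, f n < f n.+1) ->
  forall a b, a < b -> f a < f b.
Proof.
move=> H a; elim=> // b IH; rewrite ltnS leq_eqVlt => /orP [/eqP->|/IH h] //.
exact: ltn_trans h (H b).
Qed.

Lemma incr_mono_le (f : nat -> nat) : (forall n, f n < f n.+1) ->
  forall a b, a <= b -> f a <= f b.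
Proof.
move=> H a b; rewrite leq_eqVlt => /orP [/eqP->|h] //.
exact: ltnW (incr_mono H h).
Qed.

Lemma tS_succ hf s n : tS hf s n < tS hf s n.+1.
Proof. exact: (tstep_gt (fun t => convF hf n.+1 (take t s) t n.+1) (tS hf s n)). Qed.

Lemma tZ_succ hz Z n : tZ hz Z n < tZ hz Z n.+1.
Proof. exact: (tstep_gt (fun t => convZ hz n.+1 Z t n.+1) (tZ hz Z n)). Qed.

Lemma tZ_gt hz Z n : n.+1 < tZ hz Z n.
Proof.
elim: n => [|n IH] /=; rewrite /tstep; case: mu_opt => [m|] //=.
all: by rewrite ?leq_max ?ltnS ?IH.
Qed.

Lemma take_mkseq (Z : nat -> nat) t L : take t (mkseq Z L) = mkseq Z (minn t L).
Proof. by rewrite /mkseq -map_take take_iota. Qed.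

Lemma find_exact (p : pred nat) N k : k < N -> p k -> (forall i, i < k -> ~~ p i) ->
  find p (iota 0 N) = k.
Proof.
move=> kN pk Hb; case: (ltngtP (find p (iota 0 N)) k) => // h.
- have hs : has p (iota 0 N) by rewrite has_find size_iota (ltn_trans h kN).
  have := nth_find 0 hs; rewrite nth_iota ?add0n ?(ltn_trans h kN) //.
  by move: (Hb _ h) => /negbTE ->.
- have := before_find 0 h; by rewrite nth_iota // add0n pk.
Qed.

Lemma Jfin_info hf code s (X : nat -> nat) k : restr X k = Jfin hf code s ->
  Jlen hf s = k /\ forall i, i < k -> tS hf s i <= size s /\ code (take (tS hf s i) s) = X i.
Proof.
move=> H; have Hsz := congr1 size H.
rewrite /restr size_mkseq /Jfin size_map size_iota in Hsz.
split => // i Hi; split.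
- have Hf : i < find (fun k => size s < tS hf s k) (iota 0 (size s).+1) by rewrite -/(Jlen hf s) -Hsz.
  have := before_find 0 Hf.
  have Hl : i < (size s).+1.
    apply: leq_trans Hf _; by rewrite -[X in _ <= X](size_iota 0) find_size.
  rewrite nth_iota // add0n => h; rewrite leqNgt h //.
- have := congr1 (fun u => nth 0 u i) H => /=.
  rewrite /restr nth_mkseq // /Jfin (nth_map 0); last by rewrite size_iota -Hsz.
  by rewrite nth_iota ?add0n -?Hsz.
Qed.

Theorem lemma4p9
  (hf : nat -> seq nat -> nat -> nat -> bool)
  (hz : nat -> (nat -> nat) -> nat -> nat -> bool)
  (code : seq nat -> nat)
  (code_inj : injective code)
  (code_mono : forall s t : seq nat, sprefix s t -> code s < code t)
  (use_principle : forall (e : nat) (Z : nat -> nat) (k n : nat),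
      hz e Z k n = hf e (restr Z k) k n)
  (T : seq nat -> Prop) (hT : is_tree T) :
  forall X : nat -> nat,
    paths (JT hf code T) X <-> exists Z, paths T Z /\ X = calJ hz code Z.
Proof.
have LA : forall Z L n, tZ hz Z n <= L -> tS hf (restr Z L) n = tZ hz Z n.
  move=> Z L; elim=> [|n IH] Hle; rewrite tS_eq tZ_eq.
  - apply: (tstep_cong (L:=L)); last exact: Hle.
    move=> t; rewrite /convF /convZ use_principle /restr take_mkseq size_mkseq.
    by rewrite [minn (minn t L) t]minnC minnA minnn.
  - rewrite IH ?(ltnW (leq_trans (@tZ_succ _ _ _) Hle)) //.
    apply: (tstep_cong (L:=L)); last exact: Hle.
    move=> t; rewrite /convF /convZ use_principle /restr take_mkseq size_mkseq.
    by rewrite [minn (minn t L) t]minnC minnA minnn.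
have LC : forall s Z L n, L <= size s -> take L s = restr Z L -> tS hf s n <= L ->
    (forall i, i <= n -> (exists t, convZ hz i Z t i) -> exists2 t, t <= L & convZ hz i Z t i) ->
    tS hf s n = tZ hz Z n.
  move=> s Z L n Ls HtL; elim: n => [|n IH] Hle Hw; rewrite tS_eq tZ_eq.
  - apply: (tstep_cong2 (L:=L)); [|exact: Hle|exact: Hw].
    move=> t tL; rewrite /convF /convZ use_principle -(take_takel _ tL) HtL.
    by rewrite /restr take_mkseq (minn_idPl tL) size_mkseq minnn.
  - have E : tS hf s n = tZ hz Z n.
      apply: IH; first exact: (ltnW (leq_trans (@tS_succ _ _ _) Hle)).
      by move=> i Hi; apply: Hw; apply: leq_trans Hi _.
    rewrite E; apply: (tstep_cong2 (L:=L)); [|by rewrite -E; exact: Hle|exact: Hw].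
    move=> t tL; rewrite /convF /convZ use_principle -(take_takel _ tL) HtL.
    by rewrite /restr take_mkseq (minn_idPl tL) size_mkseq minnn.
move=> X; split.
- move=> HX.
  have F : forall k, {s | T s /\ restr X k = Jfin hf code s}.
    move=> k; apply: constructive_indefinite_description.
    have [s [Ts Hs]] := HX k; by exists s.
  pose sk k := proj1_sig (F k).
  have Tsk : forall k, T (sk k) by move=> k; case: (proj2_sig (F k)).
  have Ink : forall k, Jlen hf (sk k) = k /\ forall i, i < k ->
       tS hf (sk k) i <= size (sk k) /\ code (take (tS hf (sk k) i) (sk k)) = X i.
    by move=> k; apply: Jfin_info; case: (proj2_sig (F k)).
  pose sig n := take (tS hf (sk n.+1) n) (sk n.+1).
  have cons : forall n k, n < k -> take (tS hf (sk k) n) (sk k) = sig n.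
    move=> n k nk; apply: code_inj.
    by rewrite (proj2 ((proj2 (Ink k)) n nk)) (proj2 ((proj2 (Ink n.+1)) n (ltnSn n))).
  have size_sig : forall n k, n < k -> size (sig n) = tS hf (sk k) n.
    move=> n k nk; rewrite -(cons n k nk) size_takel //.
    exact: (proj1 ((proj2 (Ink k)) n nk)).
  have pref : forall a b, a <= b -> take (size (sig a)) (sig b) = sig a.
    move=> a b ab; rewrite (size_sig a b.+1) ?ltnS // -(cons b b.+1) //.
    rewrite take_takel ?(cons a b.+1) ?ltnS //.
    exact: incr_mono_le (tS_succ hf _) _ _ ab.
  have sig_gt : forall n, n.+1 < size (sig n).
    move=> n; rewrite (size_sig n n.+1) //; exact: tS_gt.
  pose Z i := nth 0 (sig i) i.
  have restrZ : forall n L, L <= size (sig n) -> restr Z L = take L (sig n).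
    move=> n L HL; apply: (@eq_from_nth _ 0).
      by rewrite /restr size_mkseq size_takel.
    move=> i; rewrite /restr size_mkseq => iL.
    rewrite nth_mkseq // nth_take // /Z.
    case: (leqP i n) => [iN|nI].
    + rewrite -(pref i n iN) nth_take //; exact: ltn_trans (ltnSn i) (sig_gt i).
    + rewrite -(pref n i (ltnW nI)) nth_take //; exact: leq_trans iL HL.
  exists Z; split.
  + move=> k; rewrite (restrZ k k); last exact: ltnW (ltn_trans (ltnSn k) (sig_gt k)).
    apply: (hT); apply: (hT); exact: Tsk.
  + apply: functional_extensionality => n.
    have Wex : forall n, exists W, forall i, i <= n -> (exists t, convZ hz i Z t i) ->
         exists2 t, t <= W & convZ hz i Z t i.
      elim=> [|m [W HW]].
      * case: (classic (exists t, convZ hz 0 Z t 0)) => [[t Ht]|Hn].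
          exists t => i; rewrite leqn0 => /eqP -> _; by exists t.
        exists 0 => i; rewrite leqn0 => /eqP -> h; by case: Hn.
      * case: (classic (exists t, convZ hz m.+1 Z t m.+1)) => [[t Ht]|Hn].
          exists (maxn W t) => i; rewrite leq_eqVlt => /orP [/eqP -> _|].
            by exists t; rewrite // leq_max leqnn orbT.
          rewrite ltnS => im h; have [t' t'W Ht'] := HW i im h.
          by exists t'; rewrite // leq_max t'W.
        exists W => i; rewrite leq_eqVlt => /orP [/eqP -> h|]; first by case: Hn.
        rewrite ltnS; exact: HW.
    have [W HW] := Wex n.
    pose j := maxn n W.
    have nj : n <= j by rewrite leq_max leqnn.
    have Wj : W <= j by rewrite leq_max leqnn orbT.
    have HtZ : tZ hz Z n = size (sig n).
      rewrite (size_sig n j.+1) ?ltnS //.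
      symmetry; apply: (LC _ _ (tS hf (sk j.+1) j)).
      * exact: (proj1 ((proj2 (Ink j.+1)) j (ltnSn j))).
      * rewrite (cons j j.+1) // -(size_sig j j.+1) // (restrZ j) ?take_size //.
      * exact: incr_mono_le (tS_succ hf _) _ _ nj.
      * move=> i i_n h; have [t tW Ht] := HW i i_n h; exists t => //.
        rewrite -(size_sig j j.+1) //; apply: leq_trans (ltnW (sig_gt j)).
        exact: leq_trans tW (leq_trans Wj (leqnSn j)).
    rewrite /calJ HtZ (restrZ n) // take_size.
    by rewrite -(proj2 ((proj2 (Ink n.+1)) n (ltnSn n))) -/(sig n).
- move=> [Z [HZ ->]] k.
  pose L := if k is k'.+1 then tZ hz Z k' else 0.
  exists (restr Z L); split; first exact: HZ.
  case: k @L => [|k'] L.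
    rewrite /L /Jfin /Jlen /restr /=.
    have h : 0 < tS hf [::] 0 by apply: ltn_trans (@tS_gt hf [::] 0).
    by rewrite /= in h; rewrite h.
  have HJ : Jlen hf (restr Z L) = k'.+1.
    rewrite /Jlen /restr size_mkseq; apply: find_exact.
    + by rewrite ltnS; exact: ltnW (@tZ_gt hz Z k').
    + have := @tS_succ hf (restr Z L) k'; by rewrite LA.
    + move=> i; rewrite ltnS => ik.
      have iL : tZ hz Z i <= L by exact: incr_mono_le (@tZ_succ hz Z) _ _ ik.
      have := LA Z L i iL; rewrite /restr => ->; by rewrite -leqNgt.
  rewrite /Jfin HJ /restr /mkseq; apply/eq_in_map => i.
  rewrite mem_iota add0n ltnS => /andP [_ ik].
  have iL : tZ hz Z i <= L by exact: incr_mono_le (@tZ_succ hz Z) _ _ ik.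
  have := LA Z L i iL; rewrite /restr => ->.
  by rewrite /calJ /restr take_mkseq (minn_idPl iL).
Qed.
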